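(* Let $n\ge1$ and let $X,Y\in\widetilde{Sp}(\mathbb{R}^n\times\mathbb{R}^n)$ with $X\neq Y$. Then there exists $f\in A_{fin}[\widetilde{Sp}(\mathbb{A}^1_n)]$ with $\varphi_X(f)\neq\varphi_Y(f)$.
   Context: A pair $(\mathbf z,\mathbf z')\in\mathbb{R}^n\times\mathbb{R}^n$ is degenerate if $z_j=z'_j$ for some $j$. $\widetilde{Sp}(\mathbb{R}^n\times\mathbb{R}^n)$ is the set of finite multisets of points of $\mathbb{R}^n\times\mathbb{R}^n$ modulo the equivalence relation generated by adding or removing degenerate pairs. For $m\ge1$ let $P_m=\mathbb{R}[x_{ij},y_{ij}]_{1\le i\le m,\,1\le j\le n}$ graded by total degree; $S_m$ permutes the block index $i$ simultaneously in $x$ and $y$; $A_m=P_m^{S_m}$; $\pi_m:A_{m+1}\to A_m$ sets $x_{m+1,j}=y_{m+1,j}=0$; $A^\infty_{fin}=\varprojlim_m A_m$ in graded rings (finite sums of compatible families of homogeneous elements of a common degree). For a finite multiset $X=\{(\mathbf{x}_1,\mathbf{y}_1),\dots,(\mathbf{x}_r,\mathbf{y}_r)\}$ and $f\in A^\infty_{fin}$, $\varphi_X(f)=f_m(\mathbf{x}_1,\mathbf{y}_1,\dots,\mathbf{x}_r,\mathbf{y}_r,0,\dots,0)$ for any $m\ge r$. $A_{fin}[\widetilde{Sp}(\mathbb{A}^1_n)]$ is the set of $f\in A^\infty_{fin}$ with $\varphi_{X\cup\{(\mathbf z,\mathbf z')\}}(f)=\varphi_X(f)$ for all finite multisets $X$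 and degenerate pairs $(\mathbf z,\mathbf z')$; for such $f$, $\varphi_X(f)$ is well defined for $X\in\widetilde{Sp}(\mathbb{R}^n\times\mathbb{R}^n)$. *)

(* Defs.v *)
From Stdlib Require Import Reals Permutation Relations.
From mathcomp Require Import all_boot all_fingroup.

Set Implicit Arguments.
Unset Strict Implicit.
Unset Printing Implicit Defensive.

Definition pt (n : nat) : Type := (n.-tuple R * n.-tuple R)%type.

Definition zero_pt (n : nat) : pt n := (nseq_tuple n R0, nseq_tuple n R0).

Definition degenerate (n : nat) (p : pt n) : Prop :=
  exists j : 'I_n, tnth p.1 j = tnth p.2 j.

(* Variables of P_m : x_{ij} (b = false) and y_{ij} (b = true). *)
Definition var (m n : nat) : Type := ('I_m * 'I_n * bool)%type.

Definition valv (m n : nat) (v : 'I_m -> pt n) (x : var m n) : R :=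
  let '(i, j, b) := x in if b then tnth (v i).2 j else tnth (v i).1 j.

(* Polynomials in P_m: finite lists of (coefficient, monomial), a monomial
   being the list (multiset) of the variables occurring in it. *)
Definition poly (m n : nat) : Type := seq (R * seq (var m n)).

Definition mono_eval (m n : nat) (v : 'I_m -> pt n) (s : seq (var m n)) : R :=
  foldr (fun x acc => Rmult (valv v x) acc) R1 s.

Definition peval (m n : nat) (p : poly m n) (v : 'I_m -> pt n) : R :=
  foldr (fun t acc => Rplus (Rmult t.1 (mono_eval v t.2)) acc) R0 p.

Definition homog (m n d : nat) (p : poly m n) : Prop :=
  forall t, List.In t p -> size t.2 = d.

(* S_m-invariance (polynomial identities over R = identities of functions). *)
Definition symmetric (m n : nat) (p : poly m n) : Prop :=
  forall (s : 'S_m) (v : 'I_m -> pt n), peval p (fun i => v (s i)) = peval p v.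

(* Extension of a valuation of m blocks by a zero (m+1)-th block: realizes
   pi_m : A_{m+1} -> A_m (set x_{m+1,j} = y_{m+1,j} = 0). *)
Definition ext0 (m n : nat) (v : 'I_m -> pt n) : 'I_m.+1 -> pt n :=
  fun i => match unlift ord_max i with Some k => v k | None => zero_pt n end.

(* A compatible family (f_m)_{m >= 1} of homogeneous elements of a common
   degree; hf F k is the component f_{k+1} in A_{k+1}. *)
Record hfam (n : nat) := HFam {
  hdeg : nat;
  hf : forall k : nat, poly k.+1 n;
  hf_homog : forall k, homog hdeg (hf k);
  hf_sym : forall k, symmetric (hf k);
  hf_compat : forall k (v : 'I_k.+1 -> pt n),
      peval (hf k.+1) (ext0 v) = peval (hf k) v
}.

(* Elements of A^infty_fin: finite sums of such families. *)
Definition Ainf (n : nat) : Type := seq (hfam n).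

Definition padX (n : nat) (X : seq (pt n)) : 'I_(size X).+1 -> pt n :=
  fun i => nth (zero_pt n) X i.

(* phi_X(f) = f_m(X, 0, ..., 0), here with m = |X| + 1 >= |X|. *)
Definition phi (n : nat) (X : seq (pt n)) (f : Ainf n) : R :=
  foldr (fun F acc => Rplus (peval (hf F (size X)) (@padX n X)) acc) R0 f.

Definition in_Afin_Sp (n : nat) (f : Ainf n) : Prop :=
  forall (X : seq (pt n)) (p : pt n), degenerate p -> phi (p :: X) f = phi X f.

(* Equivalence defining ~Sp(R^n x R^n) on finite multisets (lists up to
   permutation): generated by reordering and adding/removing degenerate pairs. *)
Inductive sp_step (n : nat) : seq (pt n) -> seq (pt n) -> Prop :=
  | sp_perm X Y : Permutation X Y -> sp_step X Y
  | sp_add X p : degenerate p -> sp_step X (p :: X).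

Definition sp_equiv (n : nat) : seq (pt n) -> seq (pt n) -> Prop :=
  clos_refl_sym_trans _ (@sp_step n).

(* Main.v *)
Require Import Defs.
From HB Require Import structures.
From Stdlib Require Import Reals Permutation Relations.
From mathcomp Require Import all_boot all_fingroup.
From Stdlib Require Import Classical ClassicalDescription Lra.

Set Implicit Arguments.
Unset Strict Implicit.
Unset Printing Implicit Defensive.

Lemma Rplus_assoc' : associative Rplus. Proof. by move=> x y z; rewrite Rplus_assoc. Qed.
HB.instance Definition _ := Monoid.isComLaw.Build R R0 Rplus Rplus_assoc' Rplus_comm Rplus_0_l.

Section S.
Variable n : nat.

Definition coord (p : pt n) (jb : 'I_n * bool) : R :=
  if jb.2 then tnth p.2 jb.1 else tnth p.1 jb.1.

Definition smono (p : pt n) (s : seq ('I_n * bool)) : R :=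
  foldr (fun x acc => Rmult (coord p x) acc) R1 s.

Definition spoly := seq (R * seq ('I_n * bool)).

Definition seval (P : spoly) (p : pt n) : R :=
  foldr (fun t acc => Rplus (Rmult t.1 (smono p t.2)) acc) R0 P.

Definition smul_t (a : R * seq ('I_n * bool)) (Q : spoly) : spoly :=
  map (fun b => (Rmult a.1 b.1, a.2 ++ b.2)) Q.

Fixpoint pmul (P Q : spoly) : spoly :=
  match P with [::] => [::] | a :: P' => smul_t a Q ++ pmul P' Q end.
Arguments pmul : simpl never.

Lemma smono_cat p s1 s2 : smono p (s1 ++ s2) = Rmult (smono p s1) (smono p s2).
Proof. elim: s1 => [|x s IH] /=; [by rewrite Rmult_1_l | by rewrite IH Rmult_assoc]. Qed.

Lemma seval_cat P Q p : seval (P ++ Q) p = Rplus (seval P p) (seval Q p).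
Proof. elim: P => [|a P IH] /=; [by rewrite Rplus_0_l | by rewrite IH Rplus_assoc]. Qed.

Lemma seval_smul a Q p : seval (smul_t a Q) p = Rmult (Rmult a.1 (smono p a.2)) (seval Q p).
Proof.
elim: Q => [|b Q IH] /=; first by rewrite Rmult_0_r.
rewrite IH smono_cat; ring.
Qed.

Lemma seval_pmul P Q p : seval (pmul P Q) p = Rmult (seval P p) (seval Q p).
Proof.
elim: P => [|a P IH]; first by rewrite /= Rmult_0_l.
rewrite /= seval_cat seval_smul IH; ring.
Qed.

Definition allne (P : spoly) := forall t, List.In t P -> t.2 <> [::].

Lemma allne_pmul P Q : allne P -> allne (pmul P Q).
Proof.
elim: P => [|a P IH] /= H t; first by [].
rewrite /= List.in_app_iff => -[].
  rewrite /smul_t List.in_map_iff => -[b [<- _]] /=.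
  have := H a (or_introl erefl). by case: (a.2).
move=> Ht; apply: (IH _ t Ht) => u Hu; apply: H; by right.
Qed.

Definition Lj (j : 'I_n) : spoly := [:: (R1, [:: (j, false)]); (Ropp R1, [:: (j, true)])].
Definition Dp : spoly := foldr (fun j acc => pmul (Lj j) acc) [:: (R1, [::])] (enum 'I_n).

Definition Dfac (p : pt n) (j : 'I_n) : R := Rminus (tnth p.1 j) (tnth p.2 j).

Lemma seval_Dp_gen (r : seq 'I_n) p :
  seval (foldr (fun j acc => pmul (Lj j) acc) [:: (R1, [::])] r) p =
  foldr (fun j acc => Rmult (Dfac p j) acc) R1 r.
Proof.
elim: r => [|j r IH] /=; first by rewrite /seval /= ; ring.
rewrite seval_pmul IH /seval /Dfac /smono /coord /=; ring.
Qed.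

Lemma prod_zero (r : seq 'I_n) p j : j \in r -> Dfac p j = R0 ->
  foldr (fun j acc => Rmult (Dfac p j) acc) R1 r = R0.
Proof.
elim: r => [|k r IH] //=; rewrite in_cons => /orP [/eqP <- -> | /IH H /H ->]; ring.
Qed.

Lemma prod_nz (r : seq 'I_n) p : (forall j, Dfac p j <> R0) ->
  foldr (fun j acc => Rmult (Dfac p j) acc) R1 r <> R0.
Proof.
move=> H; elim: r => [|k r IH] /=; first exact: R1_neq_R0.
exact: Rmult_integral_contrapositive_currified.
Qed.

Definition Dval p := foldr (fun j acc => Rmult (Dfac p j) acc) R1 (enum 'I_n).

Lemma seval_Dp p : seval Dp p = Dval p.
Proof. exact: seval_Dp_gen. Qed.

Lemma Dval_deg p : degenerate p -> Dval p = R0.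
Proof.
move=> [j Hj]; apply: (prod_zero (j := j)); first by rewrite mem_enum.
by rewrite /Dfac Hj; ring.
Qed.

Lemma Dval_nondeg p : ~ degenerate p -> Dval p <> R0.
Proof.
move=> H; apply: prod_nz => j Hj; apply: H; exists j.
rewrite /Dfac in Hj; lra.
Qed.

Lemma allne_Dp : (1 <= n)%N -> allne Dp.
Proof.
move=> hn; rewrite /Dp.
have : (Ordinal hn : 'I_n) \in enum 'I_n by rewrite mem_enum.
case: (enum _) => [//|j r] _ /=.
apply: allne_pmul => t /= [<-|[<-|[]]] //.
Qed.

End S.
Section F.
Variable n : nat.

Definition lift_mono m (i : 'I_m) (mu : seq ('I_n * bool)) : seq (var m n) :=
  map (fun jb => (i, jb.1, jb.2)) mu.

Definition fampoly m (c : R) (mu : seq ('I_n * bool)) : Defs.poly m n :=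
  if mu is [::] then [::] else map (fun i => (c, lift_mono i mu)) (enum 'I_m).

Lemma mono_eval_lift m (v : 'I_m -> pt n) i mu :
  mono_eval v (lift_mono i mu) = smono (v i) mu.
Proof. elim: mu => [|[j b] mu IH] //=; by rewrite IH. Qed.

Lemma peval_map m (v : 'I_m -> pt n) c mu (r : seq 'I_m) :
  peval (map (fun i => (c, lift_mono i mu)) r) v =
  \big[Rplus/R0]_(i <- r) Rmult c (smono (v i) mu).
Proof.
elim: r => [|i r IH]; first by rewrite big_nil.
by rewrite big_cons /= -IH mono_eval_lift.
Qed.

Lemma peval_fam m (v : 'I_m -> pt n) c mu : mu <> [::] ->
  peval (fampoly m c mu) v = \big[Rplus/R0]_(i < m) Rmult c (smono (v i) mu).
Proof.
case: mu => [//|x mu] _; rewrite /fampoly peval_map.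
by rewrite big_enum.
Qed.

Lemma fam_homog m c mu : Defs.homog (size mu) (fampoly m c mu).
Proof.
case: mu => [|x mu] t //=.
rewrite List.in_map_iff => -[i [<- _]] /=; by rewrite size_map.
Qed.

Lemma fam_sym m c mu : Defs.symmetric (fampoly m c mu).
Proof.
move=> s v; case: mu => [//|x mu].
rewrite !peval_fam //.
by rewrite [RHS](reindex_inj (@perm_inj _ s)).
Qed.

Lemma smono_zero x mu : smono (zero_pt n) (x :: mu) = R0.
Proof.
rewrite /= /coord; case: x => j [] /=; rewrite tnth_nseq; ring.
Qed.

Lemma fam_compat k c mu (v : 'I_k.+1 -> pt n) :
  peval (fampoly k.+2 c mu) (ext0 v) = peval (fampoly k.+1 c mu) v.
Proof.
case: mu => [//|x mu].
rewrite !peval_fam // big_ord_recr.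
have -> : ext0 v ord_max = zero_pt n by rewrite /ext0 unlift_none.
rewrite smono_zero Rmult_0_r -[RHS]Rplus_0_r; congr Rplus.
apply: eq_bigr => i _; congr (Rmult c (smono _ _)).
rewrite /ext0.
have -> : widen_ord (leqnSn k.+1) i = lift ord_max i by apply: val_inj; rewrite /= /bump leqNgt ltn_ord.
by rewrite liftK.
Qed.

Definition mkfam (c : R) (mu : seq ('I_n * bool)) : hfam n :=
  @HFam n (size mu) (fun k => fampoly k.+1 c mu)
    (fun k => @fam_homog k.+1 c mu) (fun k => @fam_sym k.+1 c mu)
    (fun k v => @fam_compat k c mu v).

End F.
Section M.
Variable n : nat.

Definition mkf (P : spoly n) : Ainf n := map (fun t => mkfam t.1 t.2) P.

Lemma phi_mkf X P : allne P ->
  phi X (mkf P) = \big[Rplus/R0]_(i < (size X).+1) seval P (@padX n X i).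
Proof.
elim: P => [|t P IH] H.
  by rewrite /= big1_eq.
have Ht : t.2 <> [::] by apply: H; left.
have HP : allne P by move=> u Hu; apply: H; right.
rewrite /phi /= -/(phi X (mkf P)) IH // peval_fam //.
by rewrite -big_split.
Qed.

Lemma sum_pad (h : pt n -> R) X :
  \big[Rplus/R0]_(i < (size X).+1) h (@padX n X i) =
  foldr (fun p acc => Rplus (h p) acc) (h (zero_pt n)) X.
Proof.
elim: X => [|p X IH].
  rewrite big_ord_recl big_ord0 /padX /=; ring.
rewrite big_ord_recl /= -IH; congr Rplus.
Qed.

Definition dec_pt (x y : pt n) : {x = y} + {x <> y} := excluded_middle_informative (x = y).
Definition isdeg (p : pt n) : bool := if excluded_middle_informative (degenerate p) then true else false.

Lemma isdegP p : isdeg p = true <-> degenerate p.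
Proof. rewrite /isdeg; case: excluded_middle_informative => //. Qed.

Lemma cons_equiv (p : pt n) (X Y : seq (pt n)) : sp_equiv X Y -> sp_equiv (p :: X) (p :: Y).
Proof.
elim => [X0 Y0 [X1 Y1 Hp | X1 d Hd] | X0 | X0 Y0 _ IH | X0 Y0 Z0 _ IH1 _ IH2].
- apply: rst_step; apply: sp_perm; exact: perm_skip.
- apply: (@rst_trans _ _ _ (d :: p :: X1)); first by apply: rst_step; apply: sp_add.
  apply: rst_step; apply: sp_perm; exact: perm_swap.
- exact: rst_refl.
- exact: rst_sym.
- exact: rst_trans IH2.
Qed.

Definition flt (X : seq (pt n)) := List.filter (fun p => negb (isdeg p)) X.

Lemma filter_equiv (X : seq (pt n)) : sp_equiv X (flt X).
Proof.
elim: X => [|p X IH]; first exact: rst_refl.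
rewrite /flt /=; case E: (isdeg p) => /=.
- apply: rst_trans IH; apply: rst_sym; apply: rst_step; apply: sp_add; exact/isdegP.
- exact: cons_equiv.
Qed.

Lemma count_flt (X : seq (pt n)) q : List.count_occ dec_pt (flt X) q =
  if isdeg q then 0%N else List.count_occ dec_pt X q.
Proof.
elim: X => [|p X IH] /=; first by case: isdeg.
rewrite /flt /= -/(flt X); case Ep: (isdeg p) => /=; rewrite IH; case: (dec_pt p q) => [E|Hne] //; subst p; by rewrite Ep.
Qed.

Lemma key (X Y : seq (pt n)) : (forall q, ~ degenerate q ->
   List.count_occ dec_pt X q = List.count_occ dec_pt Y q) -> sp_equiv X Y.
Proof.
move=> H.
apply: rst_trans (filter_equiv X) _.
apply: rst_trans; last by apply: rst_sym; apply: filter_equiv.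
apply: rst_step; apply: sp_perm.
apply/(Permutation_count_occ dec_pt) => q.
rewrite !count_flt; case E: (isdeg q) => //.
apply: H => /isdegP; by rewrite E.
Qed.

Lemma diff_coord (r q : pt n) : r <> q -> exists jb, coord r jb <> coord q jb.
Proof.
move=> H; apply: NNPP => H2; apply: H.
have E : forall jb, coord r jb = coord q jb.
  move=> jb; apply: NNPP => H3; apply: H2; by exists jb.
case: r q E {H2} => [r1 r2] [q1 q2] E.
congr pair; apply: eq_from_tnth => j.
- exact: (E (j, false)).
- exact: (E (j, true)).
Qed.

Lemma lagrange (q : pt n) S : exists gp : spoly n,
  seval gp q <> R0 /\ forall r, List.In r S -> r <> q -> seval gp r = R0.
Proof.
elim: S => [|r S [gp [H1 H2]]].
  exists ([:: (R1, [::])] : spoly n); split => //; rewrite /seval /=.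
  move=> E; lra.
case: (dec_pt r q) => [Erq | Nrq].
  exists gp; split => // r' [<-|Hr'] Hne; first by [].
  exact: H2.
have [jb Hjb] := diff_coord Nrq.
exists (pmul gp [:: (R1, [:: jb]); (Ropp (coord r jb), [::])]).
have Ev : forall x, seval (pmul gp [:: (R1, [:: jb]); (Ropp (coord r jb), [::])]) x =
   Rmult (seval gp x) (Rminus (coord x jb) (coord r jb)).
  move=> x; rewrite seval_pmul /seval /smono /=; ring.
split.
  rewrite Ev; apply: Rmult_integral_contrapositive_currified => //.
  move=> E; apply: Hjb; lra.
move=> r' [<-|Hr'] Hne; rewrite Ev.
  rewrite /Rminus Rplus_opp_r; ring.
by rewrite H2 // Rmult_0_l.
Qed.

End M.

Theorem lemma4p6 (n : nat) (hn : (1 <= n)%N) (X Y : seq (pt n)) :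
  ~ sp_equiv X Y ->
  exists f : Ainf n, in_Afin_Sp f /\ phi X f <> phi Y f.
Proof.
move=> hne.
have [q [hq hc]] : exists q, ~ degenerate q /\
    List.count_occ (@dec_pt n) X q <> List.count_occ (@dec_pt n) Y q.
  apply: NNPP => H; apply: hne; apply: key => q hq; apply: NNPP => hc.
  apply: H; by exists q.
have [gp [Hq HS]] := lagrange q (X ++ Y).
pose P := pmul (Dp n) gp.
have HP : allne P by apply: allne_pmul; apply: allne_Dp.
pose h := seval P.
have Eh : forall p, h p = Rmult (Dval p) (seval gp p).
  by move=> p; rewrite /h /P seval_pmul seval_Dp.
have Hdeg : forall p, degenerate p -> h p = R0.
  by move=> p Hp; rewrite Eh Dval_deg // Rmult_0_l.
have H0 : h (zero_pt n) = R0.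
  apply: Hdeg; exists (Ordinal hn); by rewrite /zero_pt /= !tnth_nseq.
have Ephi : forall Z, phi Z (mkf P) = foldr (fun p acc => Rplus (h p) acc) (h (zero_pt n)) Z.
  by move=> Z; rewrite phi_mkf // sum_pad.
have Hcount : forall Z, (forall p, List.In p Z -> p <> q -> h p = R0) ->
   foldr (fun p acc => Rplus (h p) acc) (h (zero_pt n)) Z =
   Rmult (INR (List.count_occ (@dec_pt n) Z q)) (h q).
  elim => [|p Z IH] HZ /=; first by rewrite H0; ring.
  rewrite IH; last by move=> p' Hp'; apply: HZ; right.
  case: (dec_pt p q) => [->|Hne]; last by rewrite HZ //; [ring | left].
  rewrite S_INR; ring.
have Hnz : forall p, List.In p (X ++ Y) -> p <> q -> h p = R0.
  move=> p Hp Hne; case: (classic (degenerate p)) => Hd; first exact: Hdeg.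
  by rewrite Eh HS // Rmult_0_r.
exists (mkf P); split.
  move=> Z p Hp; rewrite !Ephi /= Hdeg //; ring.
rewrite !Ephi !Hcount; first last.
- move=> p Hp; apply: Hnz; apply: List.in_or_app; by [left | right].
- move=> p Hp; apply: Hnz; apply: List.in_or_app; by [left | right].
have Hhq : h q <> R0.
  rewrite Eh; apply: Rmult_integral_contrapositive_currified => //.
  exact: Dval_nondeg.
move=> E; apply: hc; apply: INR_eq.
exact: Rmult_eq_reg_r E Hhq.
Qed.
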